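(* Let $q=2^m$. Then the setwise stabilizer $\mathrm{Stab}_{U_{q+1}}$ of $U_{q+1}$ consists exactly of the following linear fractional transformations: (I) $u\mapsto u_0u$ with $u_0\in U_{q+1}$; (II) $u\mapsto u_0u^{-1}$ with $u_0\in U_{q+1}$; (III) $u\mapsto \frac{u+c^qu_0}{cu+u_0}$ with $u_0\in U_{q+1}$ and $c\in\mathrm{GF}(q^2)^*\setminus U_{q+1}$.
   Context: $U_{q+1}$ is the set of $(q+1)$-th roots of unity in $\mathrm{GF}(q^2)$, viewed as a subset of $\mathrm{PG}(1,q^2)=\mathrm{GF}(q^2)\cup\{\infty\}$. $\mathrm{Stab}_{U_{q+1}}$ is the setwise stabilizer of $U_{q+1}$ under the action of $\mathrm{PGL}_2(\mathrm{GF}(q^2))$ on $\mathrm{PG}(1,q^2)$ by linear fractional transformations $x\mapsto\frac{ax+b}{cx+d}$. *)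

(* Defs.v *)
From HB Require Import structures.
From mathcomp Require Import all_boot all_order all_algebra all_field.
Set Implicit Arguments. Unset Strict Implicit. Unset Printing Implicit Defensive.
Import GRing.Theory.
Local Open Scope ring_scope.

(* The projective line PG(1,F) = F ∪ {∞}, modelled as option F
   with None = ∞ and Some x = x. *)
Definition projline (F : finFieldType) := option F.

Definition mobius (F : finFieldType) (a b c d : F) (x : option F) : option F :=
  match x with
  | Some x => if c * x + d != 0 then Some ((a * x + b) / (c * x + d)) else None
  | None => if c != 0 then Some (a / c) else None
  end.

Definition unity_roots (F : finFieldType) (q : nat) : {set F} :=
  [set u : F | u ^+ q.+1 == 1].

Definition unity_roots_P1 (F : finFieldType) (q : nat) : {set option F} :=
  [set Some u | u in unity_roots F q].

Definition stabilizes (T : finType) (f : T -> T) (S : {set T}) : Prop :=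
  f @: S = S.

(* Main.v *)
Require Import Defs.
From HB Require Import structures.
From mathcomp Require Import all_boot all_order all_algebra all_field.
From mathcomp Require Import ring.
Set Implicit Arguments. Unset Strict Implicit.
Import GRing.Theory.
Local Open Scope ring_scope.

Lemma char2 (F : finFieldType) (m : nat) (hF : #|F| = ((2 ^ m) ^ 2)%N) :
  (2 \in [pchar F])%N.
Proof. apply: (@card_finPcharP F 2 (m * 2)) => //; by rewrite hF expnM. Qed.

Lemma two0 (F : finFieldType) (m : nat) (hF : #|F| = ((2 ^ m) ^ 2)%N) :
  2%:R = 0 :> F.
Proof. have := pcharf0 (char2 hF). by []. Qed.

Lemma frD (F : finFieldType) (m : nat) (hF : #|F| = ((2 ^ m) ^ 2)%N) (x y : F) :
  (x + y) ^+ (2 ^ m) = x ^+ (2 ^ m) + y ^+ (2 ^ m).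
Proof.
apply: exprDn_pchar; rewrite pnatX (pnatE _ (isT : prime 2)).
by rewrite (char2 hF).
Qed.

Lemma frK (F : finFieldType) (m : nat) (hF : #|F| = ((2 ^ m) ^ 2)%N) (x : F) :
  (x ^+ (2 ^ m)) ^+ (2 ^ m) = x.
Proof. by rewrite -exprM -{2}(expf_card x) hF. Qed.

From mathcomp Require Import zify all_solvable.

Lemma q_gt1 (F : finFieldType) (m : nat) (hF : #|F| = ((2 ^ m) ^ 2)%N) :
  (1 < 2 ^ m)%N.
Proof.
have : (1 < #|F|)%N by apply/card_gt1P; exists 0, 1; rewrite eq_sym oner_neq0.
rewrite hF; case: m {hF} => [|m] //.
by move=> _; rewrite expnS; have := expn_gt0 2 m; lia.
Qed.

Lemma nontriv (F : finFieldType) (m : nat) (hF : #|F| = ((2 ^ m) ^ 2)%N) :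
  exists z : F, z ^+ (2 ^ m).+1 = 1 /\ z != 1.
Proof.
have q1 := q_gt1 hF.
set q := (2 ^ m)%N in hF q1 *.
set n := (#|F|.-1)%N.
have Fn : #|F| = n.+1 by rewrite /n hF; lia.
pose rs := enum [pred x : F | x != 0].
have : has n.-primitive_root rs.
  apply: has_prim_root.
  - rewrite /n hF; lia.
  - apply/allP => x; rewrite mem_enum inE => x0.
    rewrite unity_rootE; apply/eqP; apply: (mulfI x0).
    by rewrite -exprS -Fn expf_card mulr1.
  - exact: enum_uniq.
  - by rewrite -cardE cardC1 Fn.
case/hasP => w _ pw.
exists (w ^+ (q - 1)); split.
  rewrite -exprM.
  have -> : ((q - 1) * q.+1 = n)%N by rewrite /n hF; nia.
  exact: prim_expr_order.
rewrite -(prim_order_dvd pw); apply/negP => /dvdn_leq.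
rewrite /n hF; nia.
Qed.

Lemma inU (F : finFieldType) (m : nat) (u : F) :
  (u \in unity_roots F (2 ^ m)) = (u * u ^+ (2 ^ m) == 1).
Proof. by rewrite inE exprS. Qed.

Lemma U_nz (F : finFieldType) (m : nat) (u : F) :
  u \in unity_roots F (2 ^ m) -> u != 0.
Proof.
rewrite inU => /eqP h; apply/eqP => u0; move: h; rewrite u0 mul0r.
by move/eqP; rewrite eq_sym oner_eq0.
Qed.

Definition Pol (F : finFieldType) (m : nat) (a b u : F) :=
  a * b ^+ (2 ^ m) * u ^+ 2 + (a * a ^+ (2 ^ m) + b * b ^+ (2 ^ m)) * u
  + b * a ^+ (2 ^ m).

Lemma key (F : finFieldType) (m : nat) (hF : #|F| = ((2 ^ m) ^ 2)%N)
  (a b c d u : F) : u \in unity_roots F (2 ^ m) -> c * u + d != 0 ->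
  ((a * u + b) / (c * u + d) \in unity_roots F (2 ^ m)) =
  (Pol m a b u == Pol m c d u).
Proof.
move=> uU hd; have u0 := U_nz uU; move: uU; rewrite !inU => /eqP hu.
set q := (2 ^ m)%N in hu *.
have NE (x y : F) : u * ((x * u + y) * (x * u + y) ^+ q) = Pol m x y u.
  rewrite frD // exprMn.
  transitivity ((x * u + y) * (x ^+ q * (u * u ^+ q) + y ^+ q * u)).
    by ring.
  by rewrite hu /Pol; ring.
rewrite exprMn exprVn.
have hdq : (c * u + d) ^+ q != 0 by rewrite expf_eq0 negb_and hd orbT.
rewrite -NE -NE (inj_eq (mulfI u0)).
apply/eqP/eqP => h.
  have : (a * u + b) * (a * u + b) ^+ q =
    ((a * u + b) / (c * u + d) * ((a * u + b) ^+ q / (c * u + d) ^+ q))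
    * ((c * u + d) * (c * u + d) ^+ q) by field; apply/andP.
  by rewrite h mul1r.
by rewrite mulrACA -invfM h divff // mulf_neq0.
Qed.

Lemma quad (F : fieldType) (al be ga x y w : F) :
  x != y -> x != w -> y != w ->
  al * x ^+ 2 + be * x + ga = 0 -> al * y ^+ 2 + be * y + ga = 0 ->
  al * w ^+ 2 + be * w + ga = 0 -> [/\ al = 0, be = 0 & ga = 0].
Proof.
move=> xy xw yw hx hy hw.
have h1 : (x - y) * (al * (x + y) + be) = 0.
  transitivity ((al * x ^+ 2 + be * x + ga) - (al * y ^+ 2 + be * y + ga)).
    by ring.
  by rewrite hx hy subrr.
have h2 : (x - w) * (al * (x + w) + be) = 0.
  transitivity ((al * x ^+ 2 + be * x + ga) - (al * w ^+ 2 + be * w + ga)).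
    by ring.
  by rewrite hx hw subrr.
move/eqP: h1; rewrite mulf_eq0 subr_eq0 (negbTE xy) /= => /eqP h1.
move/eqP: h2; rewrite mulf_eq0 subr_eq0 (negbTE xw) /= => /eqP h2.
have h3 : (y - w) * al = 0.
  transitivity ((al * (x + y) + be) - (al * (x + w) + be)); first by ring.
  by rewrite h1 h2 subrr.
move/eqP: h3; rewrite mulf_eq0 subr_eq0 (negbTE yw) /= => /eqP a0.
have b0 : be = 0 by move: h1; rewrite a0 mul0r add0r.
by split => //; move: hx; rewrite a0 b0 !mul0r !add0r.
Qed.

Lemma mob_scale (F : finFieldType) (a b c d k : F) : k != 0 ->
  mobius a b c d =1 mobius (a / k) (b / k) (c / k) (d / k).
Proof.
move=> k0 [x|] /=.
  have -> : c / k * x + d / k = (c * x + d) / k by field.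
  rewrite mulf_eq0 invr_eq0 (negbTE k0) orbF.
  case: ifP => // h; congr Some; field.
  by rewrite k0 h.
rewrite mulf_eq0 invr_eq0 (negbTE k0) orbF.
case: ifP => // c0; congr Some; field.
by rewrite k0 c0.
Qed.

Lemma alg3 (F : fieldType) (a b c d fa fb fc fd : F) : a != 0 -> fa != 0 ->
  a * fb = c * fd -> a * fa + b * fb = c * fc + d * fd -> b * fa = d * fc ->
  a * d - b * c != 0 ->
  [/\ d * fd = a * fa, c * fc != a * fa & b = d * fc / fa].
Proof.
move=> a0 fa0 hA hB hC det.
have hb : b = d * fc / fa by rewrite -hC; field.
have hfb : fb = c * fd / a by rewrite -hA; field.
have hNc : c * fc != a * fa.
  apply: contraNneq det => e.
  rewrite hb.
  have -> : a * d - d * fc / fa * c = d * (a * fa - c * fc) / fa by field.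
  by rewrite e subrr mulr0 mul0r.
split => //.
rewrite hb hfb in hB.
have : (a * fa - c * fc) * (a * fa - d * fd) = 0.
  have -> : (a * fa - c * fc) * (a * fa - d * fd) =
    a * fa * ((a * fa + d * fc / fa * (c * fd / a)) - (c * fc + d * fd)).
    by field; rewrite a0 fa0.
  by rewrite hB subrr mulr0.
move/eqP; rewrite mulf_eq0 subr_eq0 eq_sym (negbTE hNc) /= subr_eq0.
by move/eqP.
Qed.

Lemma inP1 (F : finFieldType) (q : nat) (y : F) :
  (Some y \in unity_roots_P1 F q) = (y \in unity_roots F q).
Proof.
apply/imsetP/idP => [[u uU [->]] // | yU]; by exists y.
Qed.

Lemma notNone (F : finFieldType) (q : nat) :
  (None \in unity_roots_P1 F q) = false.
Proof. by apply/imsetP => -[]. Qed.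

Lemma fwd (F : finFieldType) (m : nat) (hF : #|F| = ((2 ^ m) ^ 2)%N)
  (a b c d : F) :
  stabilizes (mobius a b c d) (unity_roots_P1 F (2 ^ m)) ->
  forall u, u \in unity_roots F (2 ^ m) ->
  c * u + d != 0 /\ Pol m a b u = Pol m c d u.
Proof.
move=> st u uU.
have : mobius a b c d (Some u) \in unity_roots_P1 F (2 ^ m).
  by rewrite -st; apply: imset_f; rewrite inP1.
rewrite /=; case: ifP => hd; last by rewrite notNone.
by rewrite inP1 key // => /eqP.
Qed.

Lemma bwd (F : finFieldType) (m : nat) (hF : #|F| = ((2 ^ m) ^ 2)%N)
  (a b c d : F) : a * d - b * c != 0 ->
  (forall u, u \in unity_roots F (2 ^ m) -> c * u + d != 0) ->
  a * b ^+ (2 ^ m) = c * d ^+ (2 ^ m) ->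
  a * a ^+ (2 ^ m) + b * b ^+ (2 ^ m) = c * c ^+ (2 ^ m) + d * d ^+ (2 ^ m) ->
  b * a ^+ (2 ^ m) = d * c ^+ (2 ^ m) ->
  stabilizes (mobius a b c d) (unity_roots_P1 F (2 ^ m)).
Proof.
move=> det hpole hA hB hC.
have sub : mobius a b c d @: unity_roots_P1 F (2 ^ m) \subset
           unity_roots_P1 F (2 ^ m).
  apply/subsetP => y /imsetP [[u|]]; rewrite ?notNone // inP1 => uU -> /=.
  rewrite hpole // inP1 key ?hpole //.
  by rewrite /Pol hA hB hC.
rewrite /stabilizes; apply/eqP; rewrite eqEcard sub card_in_imset ?leqnn //.
move=> [u|] [v|]; rewrite ?inP1 ?notNone // => uU vU /=.
rewrite !hpole // => -[] /eqP; rewrite eqr_div ?hpole // => /eqP e.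
congr Some.
have : (a * d - b * c) * (u - v) = 0.
  transitivity ((a * u + b) * (c * v + d) - (a * v + b) * (c * u + d)).
    by ring.
  by rewrite e subrr.
by move/eqP; rewrite mulf_eq0 (negbTE det) /= subr_eq0 => /eqP.
Qed.

Lemma zero_q (F : finFieldType) (m : nat) : (0 : F) ^+ (2 ^ m) = 0.
Proof. by rewrite expr0n expn_eq0. Qed.

Theorem proposition5 (F : finFieldType) (m : nat)
    (hF : #|F| = ((2 ^ m) ^ 2)%N)
    (a b c d : F) (hdet : a * d - b * c != 0) :
  stabilizes (mobius a b c d) (unity_roots_P1 F (2 ^ m)) <->
  [\/ (exists2 u0, u0 \in unity_roots F (2 ^ m) &
         mobius a b c d =1 mobius u0 0 0 1),
      (exists2 u0, u0 \in unity_roots F (2 ^ m) &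
         mobius a b c d =1 mobius 0 u0 1 0)
    | (exists u0 c0 : F,
         [/\ u0 \in unity_roots F (2 ^ m), c0 != 0,
             c0 \notin unity_roots F (2 ^ m) &
             mobius a b c d =1 mobius 1 (c0 ^+ (2 ^ m) * u0) c0 u0])].
Proof.
have z0 := zero_q F m.
split.
- move=> st.
  have [z [zq z1]] := nontriv hF.
  have zU : z \in unity_roots F (2 ^ m) by rewrite inE zq.
  have z2U : z ^+ 2 \in unity_roots F (2 ^ m) by rewrite inE exprAC zq expr1n.
  have oneU : 1 \in unity_roots F (2 ^ m) by rewrite inE expr1n.
  have znz := U_nz zU.
  have z21 : 1 != z ^+ 2.
    apply/negP => /eqP e; move/negP: z1; apply; apply/eqP.
    have : (z - 1) ^+ 2 = 0.
      transitivity (z ^+ 2 - 1 - 2%:R * (z - 1)); first by ring.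
      by rewrite -e subrr (two0 hF) mul0r subr0.
    by move/eqP; rewrite expf_eq0 /= subr_eq0 => /eqP.
  have z1n : 1 != z by rewrite eq_sym.
  have zz2 : z != z ^+ 2.
    apply/negP => /eqP e; move/negP: z1; apply; apply/eqP.
    by apply: (mulfI znz); rewrite mulr1 -expr2.
  pose al := a * b ^+ (2 ^ m) - c * d ^+ (2 ^ m).
  pose be := (a * a ^+ (2 ^ m) + b * b ^+ (2 ^ m))
             - (c * c ^+ (2 ^ m) + d * d ^+ (2 ^ m)).
  pose ga := b * a ^+ (2 ^ m) - d * c ^+ (2 ^ m).
  have hP u : u \in unity_roots F (2 ^ m) -> al * u ^+ 2 + be * u + ga = 0.
    move=> uU; have [_ e] := fwd hF st uU.
    transitivity (Pol m a b u - Pol m c d u); first by rewrite /Pol /al /be /ga; ring.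
    by rewrite e subrr.
  have [/subr0_eq hA /subr0_eq hB /subr0_eq hC] :=
    quad z1n z21 zz2 (hP _ oneU) (hP _ zU) (hP _ z2U).
  have [c0|cn0] := eqVneq c 0.
    subst c.
    have ad : a * d != 0 by move: hdet; rewrite mulr0 subr0.
    have a0 : a != 0 by move: ad; rewrite mulf_eq0 negb_or => /andP[].
    have d0 : d != 0 by move: ad; rewrite mulf_eq0 negb_or => /andP[].
    have b0 : b = 0.
      move/eqP: hA; rewrite mul0r mulf_eq0 (negbTE a0) /= expf_eq0.
      by case/andP => _ /eqP.
    subst b; constructor 1; exists (a / d).
      rewrite inU exprMn exprVn.
      have -> : a / d * (a ^+ (2 ^ m) / d ^+ (2 ^ m)) =
         (a * a ^+ (2 ^ m)) / (d * d ^+ (2 ^ m)) by rewrite mulrACA invfM.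
      move: hB; rewrite z0 !mul0r !addr0 add0r => ->.
      by rewrite divff // mulf_neq0 // expf_eq0 negb_and d0 orbT.
    move=> x; rewrite (mob_scale a 0 0 d d0 x).
    by rewrite !mul0r divff.
  have [a0|an0] := eqVneq a 0.
    subst a.
    have d0 : d = 0.
      move/eqP: hC; rewrite z0 mulr0 eq_sym mulf_eq0 expf_eq0 (negbTE cn0).
      by rewrite andbF orbF => /eqP.
    subst d.
    have b0 : b != 0 by apply: contraNneq hdet => ->; rewrite !mul0r subrr.
    constructor 2; exists (b / c).
      rewrite inU exprMn exprVn.
      have -> : b / c * (b ^+ (2 ^ m) / c ^+ (2 ^ m)) =
         (b * b ^+ (2 ^ m)) / (c * c ^+ (2 ^ m)) by rewrite mulrACA invfM.
      move: hB; rewrite z0 !mul0r !addr0 add0r => ->.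
      by rewrite divff // mulf_neq0 // expf_eq0 negb_and cn0 orbT.
    move=> x; rewrite (mob_scale 0 b c 0 cn0 x).
    by rewrite !mul0r divff.
  have fa0 : a ^+ (2 ^ m) != 0 by rewrite expf_eq0 negb_and an0 orbT.
  have [hd hc hb] := alg3 an0 fa0 hA hB hC hdet.
  constructor 3; exists (d / a), (c / a); split.
  + rewrite inU exprMn exprVn.
    have -> : d / a * (d ^+ (2 ^ m) / a ^+ (2 ^ m)) =
       (d * d ^+ (2 ^ m)) / (a * a ^+ (2 ^ m)) by rewrite mulrACA invfM.
    by rewrite hd divff // mulf_neq0.
  + by rewrite mulf_neq0 // invr_eq0.
  + rewrite inU exprMn exprVn.
    have -> : c / a * (c ^+ (2 ^ m) / a ^+ (2 ^ m)) =
       (c * c ^+ (2 ^ m)) / (a * a ^+ (2 ^ m)) by rewrite mulrACA invfM.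
    apply: contra hc => /eqP e; apply/eqP.
    by rewrite -[RHS]mul1r -e mulfVK // mulf_neq0.
  + move=> x; rewrite (mob_scale a b c d an0 x) divff //.
    congr mobius.
    by rewrite exprMn exprVn hb; field; rewrite an0 fa0.
- have q1 := q_gt1 hF.
  case.
  + case=> u0 u0U h; rewrite /stabilizes (eq_imset _ h).
    have u0n := U_nz u0U; move: (u0U); rewrite inU => /eqP hu.
    apply: bwd => //.
    * by rewrite !mul0r subr0 mulr1.
    * by move=> u _; rewrite mul0r add0r oner_eq0.
    * by rewrite z0 expr1n mulr0 mul0r.
    * by rewrite z0 expr1n hu; ring.
    * by rewrite z0 mulr0 mul0r.
  + case=> u0 u0U h; rewrite /stabilizes (eq_imset _ h).
    have u0n := U_nz u0U; move: (u0U); rewrite inU => /eqP hu.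
    apply: bwd => //.
    * by rewrite !mul0r sub0r mulr1 oppr_eq0.
    * by move=> u uU; rewrite mul1r addr0 (U_nz uU).
    * by rewrite z0 mulr0 mul0r.
    * by rewrite z0 expr1n hu; ring.
    * by rewrite z0 mulr0 mul0r.
  + case=> u0 [c0 [u0U c0n c0U h]]; rewrite /stabilizes (eq_imset _ h).
    have u0n := U_nz u0U; move: (u0U); rewrite inU => /eqP hu.
    move: c0U; rewrite inU => c0U.
    apply: bwd => //.
    * have -> : 1 * u0 - c0 ^+ (2 ^ m) * u0 * c0 = u0 * (1 - c0 * c0 ^+ (2 ^ m)).
        by ring.
      by rewrite mulf_neq0 // subr_eq0 eq_sym.
    * move=> u uU; move: (uU); rewrite inU => /eqP huu.
      apply/negP => /eqP e.
      have e' : u0 = c0 * u.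
        have : u0 = - (c0 * u) by apply/eqP; rewrite -addr_eq0 addrC e.
        by rewrite (oppr_pchar2 (char2 hF)).
      have e2 : c0 * c0 ^+ (2 ^ m) = c0 * u * (c0 ^+ (2 ^ m) * u ^+ (2 ^ m)).
        by rewrite mulrACA huu mulr1.
      move: c0U; rewrite e2 -exprMn -e' hu eqxx.
      by [].
    * by rewrite mul1r exprMn (frK hF).
    * rewrite expr1n mulr1 exprMn (frK hF).
      transitivity (1 + (c0 * c0 ^+ (2 ^ m)) * (u0 * u0 ^+ (2 ^ m))); first by ring.
      by rewrite hu mulr1 addrC.
    * by rewrite expr1n mulr1 mulrC.
Qed.
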